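(* Fix $k\geqslant 2$. Suppose that for every $k$-player projection game $G'$ that is loosely-connected and satisfies $\mathbf{val}(G')<1$ there is a constant $c_{G'}>0$ with $\mathbf{val}(G'^{\otimes n})\leqslant \exp(-c_{G'} n)$ for all $n\geqslant 1$. Then for every $k$-player projection game $G$ with $\mathbf{val}(G)<1$ there is a constant $c_G>0$ with $\mathbf{val}(G^{\otimes n})\leqslant \exp(-c_G n)$ for all $n\geqslant 1$.
   Context: A $k$-player game $G$ consists of finite question sets $\mathcal{X}_1,\dots,\mathcal{X}_k$, finite answer sets $\mathcal{A}_1,\dots,\mathcal{A}_k$, a probability distribution $\mu$ on $\mathcal{X}_1\times\cdots\times\mathcal{X}_k$, and a predicate $V$ on (question tuple, answer tuple). The verifier samples $(x^1,\dots,x^k)\sim\mu$, sends $x^i$ to player $i$, player $i$ answers $\alpha^i(x^i)\in\mathcal{A}_i$ for some function $\alpha^i$ (no communication), and accepts iff $V$ holds; $\mathbf{val}(G)$ is the maximum acceptance probability over strategies. $G^{\otimes n}$ is the game with question sets $\mathcal{X}_i^n$, answer sets $\mathcal{A}_i^n$, in which $n$ question tuples are drawn independently from $\mu$ (player $i$ receiving the $n$ $i$-th coordinates) and the verifier accepts iff $V$ holds in every coordinate. $G$ is a projection game if for every question tuple $q$ there exist $D_q\geqslant1$ and maps $\sigma^i_q:\mathcal{A}_i\to[D_q]$ with $V(q,(a^1,\dots,a^k))=1$ iff $\sigma^i_q(a^i)=\sigma^{i'}_q(a^{i'})$ for all $i\neq i'$. $G$ is loosely-connected if there do not exist partitions $\mathcal{X}_i=\mathcal{X}'_i\sqcup\mathcal{X}''_i$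 ($i\in[k]$) such that $\mathsf{supp}(\mu)\subseteq(\mathcal{X}'_1\times\cdots\times\mathcal{X}'_k)\cup(\mathcal{X}''_1\times\cdots\times\mathcal{X}''_k)$ and $\mathsf{supp}(\mu)$ intersects both of these products. *)

(* Defs.v *)
From HB Require Import structures.
From mathcomp Require Import all_boot all_order all_algebra.
From mathcomp Require Import reals.
From mathcomp.analysis Require Import sequences exp.
Set Implicit Arguments. Unset Strict Implicit. Unset Printing Implicit Defensive.
Import Order.TTheory GRing.Theory Num.Theory.
Local Open Scope ring_scope.

(* A k-player game over the reals R: question sets gQ i, answer sets gA i
   (players are indexed by 'I_k), a weight function gmu on question tuples
   (a probability distribution when [game_is_distr] holds) and a predicate gV. *)
Record game (k : nat) (R : realType) : Type := Game {
  gQ : 'I_k -> finType;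
  gA : 'I_k -> finType;
  gmu : {dffun forall i, gQ i} -> R;
  gV : {dffun forall i, gQ i} -> {dffun forall i, gA i} -> bool }.

Arguments gQ {k R} g i.
Arguments gA {k R} g i.
Arguments gmu {k R} g q.
Arguments gV {k R} g q a.

Section Games.
Variables (k : nat) (R : realType).

Definition game_is_distr (G : game k R) : Prop :=
  (forall q, 0 <= gmu G q) /\ \sum_q gmu G q = 1.

Definition game_strategy (G : game k R) := {dffun forall i, {ffun gQ G i -> gA G i}}.

Definition game_answers (G : game k R) (s : game_strategy G) (q : {dffun forall i, gQ G i})
  : {dffun forall i, gA G i} := [ffun i => s i (q i)].

Definition win_prob (G : game k R) (s : game_strategy G) : R :=
  \sum_q gmu G q * (gV G q (game_answers s q))%:R.

Definition game_val (G : game k R) : R := \big[Num.max/0]_(s : game_strategy G) win_prob s.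

Definition game_coord (n : nat) (T : 'I_k -> finType)
  (q : {dffun forall i, {ffun 'I_n -> T i}}) (j : 'I_n) : {dffun forall i, T i} :=
  [ffun i => q i j].

Definition game_tensor (G : game k R) (n : nat) : game k R :=
  @Game k R (fun i => {ffun 'I_n -> gQ G i}) (fun i => {ffun 'I_n -> gA G i})
    (fun q => \prod_(j < n) gmu G (game_coord q j))
    (fun q a => [forall j : 'I_n, gV G (game_coord q j) (game_coord a j)]).

Definition projection_game (G : game k R) : Prop :=
  forall q : {dffun forall i, gQ G i},
    exists (D : nat) (_ : (0 < D)%N) (sigma : forall i, gA G i -> 'I_D),
      forall a : {dffun forall i, gA G i},
        gV G q a <-> (forall i i' : 'I_k, sigma i (a i) = sigma i' (a i')).

Definition game_supp (G : game k R) (q : {dffun forall i, gQ G i}) : Prop := gmu G q != 0.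

(* loosely-connected: no partitions X_i = X'_i |_| X''_i (X'_i = P i,
   X''_i = its complement) with game_supp contained in the union of the two
   products and meeting both. *)
Definition loosely_connected (G : game k R) : Prop :=
  ~ exists P : forall i, {set gQ G i},
      [/\ (forall q, game_supp q -> (forall i, q i \in P i) \/ (forall i, q i \notin P i)),
          (exists q, game_supp q /\ forall i, q i \in P i) &
          (exists q, game_supp q /\ forall i, q i \notin P i)].

End Games.

(* Main.v *)
Require Import Defs.
From HB Require Import structures.
From mathcomp Require Import all_boot all_order all_algebra.
From mathcomp Require Import reals.
From mathcomp.analysis Require Import sequences exp.
From Stdlib Require Import Classical.
Import Order.TTheory GRing.Theory Num.Theory.
Local Open Scope ring_scope.
Set Implicit Arguments. Unset Strict Implicit. Unset Printing Implicit Defensive.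

Section S.
Variables (k : nat) (R : realType).

Lemma val_ge (G : game k R) (s : game_strategy G) : win_prob s <= game_val G.
Proof.
rewrite /game_val (bigD1 s) //=.
by rewrite le_max lexx.
Qed.

Lemma val_le (G : game k R) (X : R) : 0 <= X -> (forall s : game_strategy G, win_prob s <= X) -> game_val G <= X.
Proof.
move=> X0 H; rewrite /game_val.
elim/big_ind: _ => //.
by move=> x y hx hy; rewrite ge_max hx hy.
Qed.

Lemma val_lt (G : game k R) (X : R) : 0 < X -> (forall s : game_strategy G, win_prob s < X) -> game_val G < X.
Proof.
move=> X0 H; rewrite /game_val.
elim/big_ind: _ => //.
by move=> x y hx hy; rewrite gt_max hx hy.
Qed.

Lemma sum_coord (T : 'I_k -> finType) m (g : {dffun forall i, T i} -> R) :
 \sum_(z : {dffun forall i, {ffun 'I_m -> T i}}) \prod_(u < m) g (game_coord z u)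
   = (\sum_y g y) ^+ m.
Proof.
pose h (r : {ffun 'I_m -> {dffun forall i, T i}}) : {dffun forall i, {ffun 'I_m -> T i}} :=
  [ffun i => [ffun u => r u i]].
pose h' (z : {dffun forall i, {ffun 'I_m -> T i}}) : {ffun 'I_m -> {dffun forall i, T i}} :=
  [ffun u => game_coord z u].
have hK : cancel h' h.
  move=> z; apply/ffunP => i; apply/ffunP => u; by rewrite !ffunE.
have hK' : cancel h h'.
  move=> r; apply/ffunP => u; apply/ffunP => i; by rewrite !ffunE.
rewrite (reindex h); last by exists h' => x _.
have -> : \sum_j \prod_(u < m) g (game_coord (h j) u) = \sum_(j : {ffun 'I_m -> {dffun forall i, T i}}) \prod_(u < m) g (j u).
  apply: eq_bigr => r _; apply: eq_bigr => u _; congr g.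
  by apply/ffunP => i; rewrite !ffunE.
rewrite -(bigA_distr_bigA (fun (u : 'I_m) y => g y)).
by rewrite prodr_const card_ord.
Qed.

Section Glue.
Variables (n : nat) (B : {set 'I_n}) (T : finType) (d : T).
Definition glue (x : {ffun 'I_#|B| -> T}) (z : {ffun 'I_#|~:B| -> T}) : {ffun 'I_n -> T} :=
 [ffun j => if [pick t : 'I_#|B| | enum_val t == j] is Some t then x t
   else if [pick u : 'I_#|~:B| | enum_val u == j] is Some u then z u else d].
Definition restr (r : {ffun 'I_n -> T}) : {ffun 'I_#|B| -> T} := [ffun t => r (enum_val t)].
Definition restrC (r : {ffun 'I_n -> T}) : {ffun 'I_#|~:B| -> T} := [ffun t => r (enum_val t)].

Lemma glue_in x z (t : 'I_#|B|) : glue x z (enum_val t) = x t.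
Proof.
rewrite ffunE; case: pickP => [t' /eqP /enum_val_inj -> // | H].
by have := H t; rewrite eqxx.
Qed.

Lemma glue_out x z (u : 'I_#|~:B|) : glue x z (enum_val u) = z u.
Proof.
rewrite ffunE; case: pickP => [t' /eqP E | _].
  have := enum_valP u; rewrite -E inE.
  by have := enum_valP t' => ->.
case: pickP => [u' /eqP /enum_val_inj -> // | H].
by have := H u; rewrite eqxx.
Qed.

Lemma glueK r : glue (restr r) (restrC r) = r.
Proof.
apply/ffunP => j; case: (boolP (j \in B)) => jB.
  have E := enum_rankK_in jB jB.
  by rewrite -{1}E glue_in ffunE E.
have jC : j \in ~:B by rewrite inE.
have E := enum_rankK_in jC jC.
by rewrite -{1}E glue_out ffunE E.
Qed.

Lemma restr_glue x z : restr (glue x z) = x.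
Proof. by apply/ffunP => t; rewrite ffunE glue_in. Qed.
Lemma restrC_glue x z : restrC (glue x z) = z.
Proof. by apply/ffunP => t; rewrite ffunE glue_out. Qed.
End Glue.

Definition with_mu (G : game k R) (mu' : {dffun forall i, gQ G i} -> R) : game k R :=
  @Game k R (gQ G) (gA G) mu' (gV G).
Arguments with_mu : clear implicits.

Section Core.
Variables (G : game k R) (mu1 mu2 : {dffun forall i, gQ G i} -> R) (a b c : R)
  (d : {dffun forall i, gQ G i}).
Hypotheses (a0 : 0 <= a) (b0 : 0 <= b) (mu1_ge0 : forall q, 0 <= mu1 q)
  (mu2_ge0 : forall q, 0 <= mu2 q) (mu2_sum : \sum_q mu2 q = 1)
  (Hval : forall m, game_val (game_tensor (with_mu G mu1) m) <= expR (- (c * m%:R))).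

Section PerF.
Variables (n : nat) (s : game_strategy (game_tensor G n)) (f : {ffun 'I_n -> bool}).
Let B := [set j | f j].

Definition GlueP (x : {dffun forall i, {ffun 'I_#|B| -> gQ G i}})
  (z : {dffun forall i, {ffun 'I_#|~:B| -> gQ G i}}) : {dffun forall i, {ffun 'I_n -> gQ G i}} :=
  [ffun i => glue (d i) (x i) (z i)].

Definition RestrP (q : {dffun forall i, {ffun 'I_n -> gQ G i}}) :
  {dffun forall i, {ffun 'I_#|B| -> gQ G i}} := [ffun i => restr B (q i)].
Definition RestrCP (q : {dffun forall i, {ffun 'I_n -> gQ G i}}) :
  {dffun forall i, {ffun 'I_#|~:B| -> gQ G i}} := [ffun i => restrC B (q i)].

Definition sP (z : {dffun forall i, {ffun 'I_#|~:B| -> gQ G i}}) :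
  game_strategy (game_tensor (with_mu G mu1) #|B|) :=
  [ffun i => [ffun y : {ffun 'I_#|B| -> gQ G i} =>
     [ffun t : 'I_#|B| => s i (glue (d i) y (z i)) (enum_val t)]]].

Lemma coord_in x z (t : 'I_#|B|) : game_coord (GlueP x z) (enum_val t) = game_coord x t.
Proof. apply/ffunP => i; rewrite ffunE.
have -> : (GlueP x z i) = glue (d i) (x i) (z i) by rewrite ffunE.
by rewrite glue_in ffunE. Qed.
Lemma coord_out x z (t : 'I_#|~:B|) : game_coord (GlueP x z) (enum_val t) = game_coord z t.
Proof. apply/ffunP => i; rewrite ffunE.
have -> : (GlueP x z i) = glue (d i) (x i) (z i) by rewrite ffunE.
by rewrite glue_out ffunE. Qed.

Lemma perF :
  \sum_q (\prod_(j < n) (if f j then a * mu1 (game_coord q j) else b * mu2 (game_coord q j)))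
     * (gV (game_tensor G n) q (game_answers s q))%:R
  <= \prod_(j < n) (if f j then a * expR (- c) else b).
Proof.
pose W q := \prod_(j < n) (if f j then a * mu1 (game_coord q j) else b * mu2 (game_coord q j)).
apply: (@le_trans _ _ (\sum_q W q * [forall t : 'I_#|B|,
     gV G (game_coord q (enum_val t)) (game_coord (game_answers s q) (enum_val t))]%:R)).
  apply: ler_sum => q _; apply: ler_wpM2l.
    by apply: prodr_ge0 => j _; case: (f j); apply: mulr_ge0.
  rewrite ler_nat; case E: [forall t : 'I_#|B|, _]; first exact: leq_b1.
  case E2: (gV _ _ _) => //=.
  move/forallP: E2 => H.
  by move/negbT/forallPn: E => [t /negP]; case; apply: H.
rewrite (reindex (fun p => GlueP p.1 p.2)); last first.
  exists (fun q => (RestrP q, RestrCP q)) => [[x z] _ | q _] /=.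
    congr pair; apply/ffunP => i; rewrite !ffunE ?restr_glue ?restrC_glue //.
  by apply/ffunP => i; rewrite !ffunE glueK.
pose Pz (z : {dffun forall i, {ffun 'I_#|~:B| -> gQ G i}}) :=
  \prod_(u < #|~:B|) (b * mu2 (game_coord z u)).
pose Px (x : {dffun forall i, {ffun 'I_#|B| -> gQ G i}}) :=
  \prod_(t < #|B|) (a * mu1 (game_coord x t)).
have step : forall x z, W (GlueP x z) * [forall t : 'I_#|B|,
     gV G (game_coord (GlueP x z) (enum_val t))
       (game_coord (game_answers s (GlueP x z)) (enum_val t))]%:R
  = Pz z * (Px x * (gV (game_tensor (with_mu G mu1) #|B|) x (game_answers (sP z) x))%:R).
  move=> x z.
  rewrite mulrA [Pz z * _]mulrC; congr (_ * _ %:R).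
    rewrite /W (bigID (fun j => j \in B)) /=; congr (_ * _).
      rewrite (eq_bigr (fun j => a * mu1 (game_coord (GlueP x z) j))); last first.
        by move=> j; rewrite inE => ->.
      rewrite big_enum_val /Px; apply: eq_bigr => t _; by rewrite coord_in.
    rewrite (eq_bigr (fun j => b * mu2 (game_coord (GlueP x z) j))); last first.
      by move=> j; rewrite inE => /negbTE ->.
    rewrite (eq_bigl (fun j => j \in ~:B)); last by move=> j; rewrite !inE.
    rewrite big_enum_val /Pz; apply: eq_bigr => t _; by rewrite coord_out.
  rewrite /game_tensor /=.
  have E : forall t : 'I_#|B|, game_coord (game_answers s (GlueP x z)) (enum_val t) =
     game_coord (game_answers (sP z) x) t.
    by move=> t; apply/ffunP => i; rewrite !ffunE.
  congr (nat_of_bool _); apply/idP/idP => /forallP H; apply/forallP => t; have := H t; by rewrite coord_in E.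
rewrite (eq_bigr (fun p => Pz p.2 * (Px p.1 *
   (gV (game_tensor (with_mu G mu1) #|B|) p.1 (game_answers (sP p.2) p.1))%:R))); last first.
  by move=> [x z] _; exact: step.
rewrite -(pair_bigA _ (fun x z => Pz z * (Px x *
   (gV (game_tensor (with_mu G mu1) #|B|) x (game_answers (sP z) x))%:R))) /=.
rewrite exchange_big /=.
apply: (@le_trans _ _ (\sum_z Pz z * (a ^+ #|B| * expR (- (c * #|B|%:R))))).
  apply: ler_sum => z _; rewrite -big_distrr /=; apply: ler_wpM2l.
    by apply: prodr_ge0 => u _; apply: mulr_ge0.
  have -> : \sum_x Px x * (gV (game_tensor (with_mu G mu1) #|B|) x (game_answers (sP z) x))%:R
      = a ^+ #|B| * win_prob (sP z).
    rewrite /win_prob big_distrr; apply: eq_bigr => x _.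
    by rewrite /Px big_split /= prodr_const card_ord -mulrA.
  apply: ler_wpM2l; first exact: exprn_ge0.
  exact: le_trans (val_ge _) (Hval _).
rewrite -mulr_suml /Pz.
rewrite (@sum_coord (gQ G) _ (fun y => b * mu2 y)) -big_distrr /= mu2_sum mulr1.
rewrite (bigID (fun j => j \in B)) /=.
rewrite (eq_bigr (fun j => a * expR (- c))); last by move=> j; rewrite inE => ->.
rewrite (eq_bigr (fun j => b) (P := fun j => ~~ (j \in B))); last first.
  by move=> j; rewrite inE => /negbTE ->.
rewrite (eq_bigl (fun j => j \in ~:B) (fun j => b)); last by move=> j; rewrite !inE.
rewrite prodr_const prodr_const -mulNr expRM_natr exprMn.
by rewrite mulrC.
Qed.
End PerF.

Hypothesis Hmu : forall q, gmu G q = a * mu1 q + b * mu2 q.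

Lemma core n : game_val (game_tensor G n) <= (a * expR (- c) + b) ^+ n.
Proof.
have A0 : 0 <= a * expR (- c) + b.
  by apply: addr_ge0 => //; apply: mulr_ge0 => //; apply/ltW/expR_gt0.
apply: val_le; first exact: exprn_ge0.
move=> s; rewrite /win_prob /=.
have E : forall q : {dffun forall i, {ffun 'I_n -> gQ G i}},
  \prod_(j < n) gmu G (game_coord q j) = \sum_(f : {ffun 'I_n -> bool})
     \prod_(j < n) (if f j then a * mu1 (game_coord q j) else b * mu2 (game_coord q j)).
  move=> q; rewrite -(bigA_distr_bigA (fun (j : 'I_n) (bb : bool) =>
     if bb then a * mu1 (game_coord q j) else b * mu2 (game_coord q j))) /=.
  by apply: eq_bigr => j _; rewrite big_bool /= Hmu.
rewrite (eq_bigr (fun q => \sum_(f : {ffun 'I_n -> bool})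
     \prod_(j < n) (if f j then a * mu1 (game_coord q j) else b * mu2 (game_coord q j))
     * (gV (game_tensor G n) q (game_answers s q))%:R)); last first.
  by move=> q _; rewrite E mulr_suml.
rewrite exchange_big /=.
apply: (@le_trans _ _ (\sum_(f : {ffun 'I_n -> bool}) \prod_(j < n) (if f j then a * expR (- c) else b))).
  by apply: ler_sum => f _; apply: perF.
rewrite -(bigA_distr_bigA (fun (j : 'I_n) (bb : bool) => if bb then a * expR (- c) else b)) /=.
by rewrite (eq_bigr (fun _ => a * expR (- c) + b)) ?prodr_const ?card_ord // => j _; rewrite big_bool.
Qed.
End Core.

Lemma val_tensor_le1 (G : game k R) m : game_is_distr G -> game_val (game_tensor G m) <= 1.
Proof.
move=> [H0 H1]; apply: val_le => // s.
rewrite /win_prob /=.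
apply: (@le_trans _ _ (\sum_(q : {dffun forall i, {ffun 'I_m -> gQ G i}})
    \prod_(j < m) gmu G (game_coord q j))).
  apply: ler_sum => q _; rewrite -[X in _ <= X]mulr1; apply: ler_wpM2l.
    by apply: prodr_ge0.
  by rewrite lern1 leq_b1.
by rewrite (@sum_coord (gQ G) _ (fun y => gmu G y)) H1 expr1n.
Qed.

Lemma finish (G : game k R) (mu1 mu2 : {dffun forall i, gQ G i} -> R) (a b c : R) :
  0 < a -> 0 <= b -> a + b = 1 ->
  (forall q, 0 <= mu1 q) -> \sum_q mu1 q = 1 ->
  (forall q, 0 <= mu2 q) -> \sum_q mu2 q = 1 ->
  (forall q, gmu G q = a * mu1 q + b * mu2 q) -> 0 < c ->
  (forall n, (1 <= n)%N -> game_val (game_tensor (with_mu G mu1) n) <= expR (- (c * n%:R))) ->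
  exists c', 0 < c' /\ forall n, (1 <= n)%N -> game_val (game_tensor G n) <= expR (- (c' * n%:R)).
Proof.
move=> a0 b0 ab m10 m1s m20 m2s Hmu c0 Hc.
case: (pickP (fun _ : {dffun forall i, gQ G i} => true)) => [d _ | H0]; last first.
  by move: m2s; rewrite big_pred0 // => /eqP; rewrite eq_sym oner_eq0.
have Hval : forall m, game_val (game_tensor (with_mu G mu1) m) <= expR (- (c * m%:R)).
  case=> [|m]; last exact: Hc.
  rewrite mulr0 oppr0 expR0; exact: val_tensor_le1.
pose beta := a * expR (- c) + b.
have bpos : 0 < beta by apply: ltr_wpDr => //; apply: mulr_gt0 => //; exact: expR_gt0.
have blt1 : beta < 1.
  rewrite -ab /beta ltrD2r -[X in _ < X]mulr1 ltr_pM2l //.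
  by rewrite expR_lt1 oppr_lt0.
exists (- ln beta); split.
  by rewrite oppr_gt0; apply: ln_lt0; rewrite bpos blt1.
move=> n _; rewrite mulNr opprK expRM_natr lnK; last by rewrite posrE.
exact: (@core G mu1 mu2 a b c d (ltW a0) b0 m10 m20 m2s Hval Hmu n).
Qed.

Lemma term_le_sum (T : finType) (F : T -> R) x : (forall y, 0 <= F y) -> F x <= \sum_y F y.
Proof.
move=> H; rewrite (bigD1 x) //=; apply: ler_wpDr => //; exact: sumr_ge0.
Qed.

Lemma supp_lt (G : game k R) (mu' : {dffun forall i, gQ G i} -> R) q0 :
  (forall q, mu' q != 0 -> gmu G q != 0) -> gmu G q0 != 0 -> mu' q0 = 0 ->
  (#|[set q | mu' q != 0%R]| < #|[set q | gmu G q != 0%R]|)%N.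
Proof.
move=> Hs Hq0 Hm; apply: proper_card; apply/properP; split.
  by apply/subsetP => q; rewrite !inE; exact: Hs.
by exists q0; rewrite !inE // Hm eqxx.
Qed.

Lemma split_step (hk : (0 < k)%N) (G : game k R) : game_is_distr G -> game_val G < 1 ->
  ~ loosely_connected G ->
  exists (mu1 mu2 : {dffun forall i, gQ G i} -> R) (a b : R),
   [/\ 0 < a, 0 <= b, a + b = 1,
       ((forall q, 0 <= mu1 q) /\ \sum_q mu1 q = 1) /\ ((forall q, 0 <= mu2 q) /\ \sum_q mu2 q = 1)
     & (forall q, gmu G q = a * mu1 q + b * mu2 q) /\ game_val (with_mu G mu1) < 1
       /\ (#|[set q | mu1 q != 0%R]| < #|[set q | gmu G q != 0%R]|)%N].
Proof.
move=> [H0 H1] Hv nLC.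
have [P [Hs [q1 [s1 Hq1]] [q2 [s2 Hq2]]]] := NNPP _ nLC.
pose inP (q : {dffun forall i, gQ G i}) := [forall i, q i \in P i].
pose outP (q : {dffun forall i, gQ G i}) := [forall i, q i \notin P i].
have io : forall q, inP q -> outP q = false.
  move=> q /forallP hi; apply/negbTE/negP => /forallP ho.
  by have := ho (Ordinal hk); rewrite hi.
have in1 : inP q1 by apply/forallP.
have out2 : outP q2 by apply/forallP.
have Hdec : forall q, gmu G q = gmu G q * (inP q)%:R + gmu G q * (outP q)%:R.
  move=> q; case: (boolP (inP q)) => hi.
    by rewrite io // mulr1 mulr0 addr0.
  case: (boolP (outP q)) => ho.
    by rewrite mulr0 mulr1 add0r.
  case E: (gmu G q == 0); first by move/eqP: E ->; rewrite !mul0r addr0.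
  have := Hs q (negbT E); case=> H.
    by move: hi; have -> : inP q by apply/forallP.
  by move: ho; have -> : outP q by apply/forallP.
pose p := \sum_q gmu G q * (inP q)%:R.
pose p' := \sum_q gmu G q * (outP q)%:R.
have pp : p + p' = 1 by rewrite -H1 /p /p' -big_split; apply: eq_bigr => q _; exact: esym (Hdec q).
have ge0 : forall q (bb : bool), 0 <= gmu G q * bb%:R by move=> q bb; apply: mulr_ge0.
have p0 : 0 < p.
  apply: (@lt_le_trans _ _ (gmu G q1 * (inP q1)%:R)); last first.
    by apply: (@term_le_sum _ (fun q => gmu G q * (inP q)%:R)) => y.
  by rewrite in1 mulr1 lt0r s1 H0.
have p'0 : 0 < p'.
  apply: (@lt_le_trans _ _ (gmu G q2 * (outP q2)%:R)); last first.
    by apply: (@term_le_sum _ (fun q => gmu G q * (outP q)%:R)) => y.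
  by rewrite out2 mulr1 lt0r s2 H0.
pose mu1 q := gmu G q * (inP q)%:R / p.
pose mu2 q := gmu G q * (outP q)%:R / p'.
have m10 : forall q, 0 <= mu1 q by move=> q; apply: divr_ge0 => //; apply: ltW.
have m20 : forall q, 0 <= mu2 q by move=> q; apply: divr_ge0 => //; apply: ltW.
have m1s : \sum_q mu1 q = 1 by rewrite /mu1 -mulr_suml divff // gt_eqF.
have m2s : \sum_q mu2 q = 1 by rewrite /mu2 -mulr_suml divff // gt_eqF.
have Hmu : forall q, gmu G q = p * mu1 q + p' * mu2 q.
  move=> q; rewrite /mu1 /mu2 [p * _]mulrC [p' * _]mulrC !divfK ?gt_eqF //.
have Hmu' : forall q, gmu G q = p' * mu2 q + p * mu1 q by move=> q; rewrite addrC.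
have sub1 : forall q, mu1 q != 0 -> gmu G q != 0.
  by move=> q; apply: contra => /eqP E; rewrite /mu1 E !mul0r.
have sub2 : forall q, mu2 q != 0 -> gmu G q != 0.
  by move=> q; apply: contra => /eqP E; rewrite /mu2 E !mul0r.
case: (ltP (game_val (with_mu G mu1)) 1) => h1.
  exists mu1, mu2, p, p'; split => //; first by apply: ltW.
  split=> //; split=> //; apply: (supp_lt sub1 s2).
  have nin2 : inP q2 = false by apply/negbTE/negP => h; move: out2; rewrite io.
  by rewrite /mu1 nin2 mulr0 mul0r.
case: (ltP (game_val (with_mu G mu2)) 1) => h2.
  exists mu2, mu1, p', p; split => //; first by apply: ltW.
  - by rewrite addrC.
  split=> //; split=> //; apply: (supp_lt sub2 s1).
  by rewrite /mu2 (io _ in1) mulr0 mul0r.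
exfalso.
have [t1 Ht1] : exists t : game_strategy (with_mu G mu1), 1 <= win_prob t.
  case: (boolP [exists t : game_strategy (with_mu G mu1), 1 <= win_prob t]) => [/existsP // | /existsPn H].
  have : game_val (with_mu G mu1) < 1.
    by apply: val_lt => // t; rewrite ltNge; exact: H.
  by rewrite ltNge h1.
have [t2 Ht2] : exists t : game_strategy (with_mu G mu2), 1 <= win_prob t.
  case: (boolP [exists t : game_strategy (with_mu G mu2), 1 <= win_prob t]) => [/existsP // | /existsPn H].
  have : game_val (with_mu G mu2) < 1.
    by apply: val_lt => // t; rewrite ltNge; exact: H.
  by rewrite ltNge h2.
pose t : game_strategy G := [ffun i => [ffun x => if x \in P i then t1 i x else t2 i x]].
have E1 : forall q, mu1 q * (gV G q (game_answers t q))%:R = mu1 q * (gV G q (game_answers t1 q))%:R.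
  move=> q; case: (boolP (inP q)) => hi.
    congr (_ * (nat_of_bool (gV G q _))%:R); apply/ffunP => i; rewrite !ffunE.
    by move/forallP: hi => ->.
  by rewrite /mu1 (negbTE hi) mulr0 !mul0r.
have E2 : forall q, mu2 q * (gV G q (game_answers t q))%:R = mu2 q * (gV G q (game_answers t2 q))%:R.
  move=> q; case: (boolP (outP q)) => ho.
    congr (_ * (nat_of_bool (gV G q _))%:R); apply/ffunP => i; rewrite !ffunE.
    by move/forallP: ho => /(_ i) /negbTE ->.
  by rewrite /mu2 (negbTE ho) mulr0 !mul0r.
have : 1 <= win_prob t.
  have -> : win_prob t = p * win_prob t1 + p' * win_prob t2.
    rewrite /win_prob !big_distrr -big_split /=; apply: eq_bigr => q _.
    rewrite Hmu mulrDl; congr (_ + _); rewrite -mulrA; congr (_ * _); [exact: E1 | exact: E2].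
  rewrite -pp; apply: lerD; rewrite -[X in X <= _]mulr1; apply: ler_wpM2l => //; exact: ltW.
move=> h; have := le_trans h (val_ge t).
by rewrite leNgt Hv.
Qed.
End S.

Theorem lemma2p4 (k : nat) (hk : (2 <= k)%N) (R : realType) :
  (forall G' : game k R, game_is_distr G' -> projection_game G' ->
     loosely_connected G' -> game_val G' < 1 ->
     exists c : R, 0 < c /\
       forall n : nat, (1 <= n)%N -> game_val (game_tensor G' n) <= expR (- (c * n%:R)))
  ->
  forall G : game k R, game_is_distr G -> projection_game G -> game_val G < 1 ->
    exists c : R, 0 < c /\
      forall n : nat, (1 <= n)%N -> game_val (game_tensor G n) <= expR (- (c * n%:R)).
Proof.
move=> Hyp.
have hk0 : (0 < k)%N by apply: leq_trans hk.
suff H : forall N (G : game k R), (#|[set q | gmu G q != 0%R]| < N)%N ->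
    game_is_distr G -> projection_game G -> game_val G < 1 ->
    exists c : R, 0 < c /\ forall n, (1 <= n)%N ->
      game_val (game_tensor G n) <= expR (- (c * n%:R)).
  by move=> G; apply: H (ltnSn _).
elim=> [|N IH] G HN Hd Hp Hv; first by [].
case: (classic (loosely_connected G)) => LC; first exact: Hyp.
have [mu1 [mu2 [a [b [a0 b0 ab [[m10 m1s] [m20 m2s]] [Hmu [Hv1 Hs1]]]]]]] :=
  split_step hk0 Hd Hv LC.
rewrite ltnS in HN.
have [c [c0 Hc]] := IH (@with_mu k R G mu1) (leq_trans Hs1 HN) (conj m10 m1s) Hp Hv1.
exact: (finish a0 b0 ab m10 m1s m20 m2s Hmu c0 Hc).
Qed.
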